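(* Let $\mathcal{H}_X,\mathcal{H}_Z,\mathcal{H}_A$ be finite-dimensional Hilbert spaces with $d_A=\dim\mathcal{H}_A$, and let $\mathcal{S}:\mathrm{CPTP}(\mathcal{H}_X,\mathcal{H}_Z\otimes\mathcal{H}_A)\to\mathrm{CPTP}(\mathcal{H}_X,\mathcal{H}_Z)$ be the partial-trace supermap $\mathcal{S}(\mathcal{N})=\mathrm{Tr}_A\circ\mathcal{N}$. Let $\Gamma\in\mathrm{CPTP}(\mathcal{H}_X,\mathcal{H}_Z\otimes\mathcal{H}_A)$ be such that the Choi operators $C_\Gamma$ and $C_{\mathcal{S}(\Gamma)}$ are full-rank (invertible). Let $\mathcal{R}:\mathrm{CPTP}(\mathcal{H}_X,\mathcal{H}_Z)\to\mathrm{CPTP}(\mathcal{H}_{X_{\rm r}},\mathcal{H}_{Z_{\rm r}}\otimes\mathcal{H}_{A_{\rm r}})$ be a superchannel, where $X_{\rm r},Z_{\rm r},A_{\rm r}$ are copies of $X,Z,A$, and suppose $\mathcal{R}(\mathcal{S}(\Gamma))=\Gamma$. Then there exist a finite-dimensional Hilbert space $\mathcal{H}_R$ with $d_R:=\dim\mathcal{H}_R\geq d_A$ and an operator $V:\mathcal{H}_X\otimes\mathcal{H}_Z\otimes\mathcal{H}_R\to\mathcal{H}_{X_{\rm r}}\otimes\mathcal{H}_{Z_{\rm r}}\otimes\mathcal{H}_{A_{\rm r}}$ with $VV^\dagger=\mathbb{1}_{X_{\rm r}Z_{\rm r}A_{\rm r}}$ (i.e. $V^\dagger$ is an isometry) such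 that for every operator $\tau$ on $\mathcal{H}_X\otimes\mathcal{H}_Z$, $$\mathcal{C}_{\mathcal{R}}(\tau)=C_\Gamma^{1/2}\,V\left(C_{\mathcal{S}(\Gamma)}^{-1/2}\,\tau\,C_{\mathcal{S}(\Gamma)}^{-1/2}\otimes\mathbb{1}_R\right)V^\dagger\,C_\Gamma^{1/2},$$ where $C_\Gamma^{1/2}$ is regarded as an operator on $\mathcal{H}_{X_{\rm r}}\otimes\mathcal{H}_{Z_{\rm r}}\otimes\mathcal{H}_{A_{\rm r}}$. Furthermore, if the rank of $\mathcal{R}$ equals $d_A$, then $d_R=d_A$ and $V$ is unitary.
   Context: $\mathrm{CPTP}(\mathcal{H},\mathcal{K})$ denotes the set of quantum channels (completely positive trace-preserving maps) from operators on $\mathcal{H}$ to operators on $\mathcal{K}$. The Choi operator of a linear map $\mathcal{N}$ from operators on $\mathcal{H}_{\rm in}$ (with orthonormal basis $\{|i\rangle\}$) to operators on $\mathcal{H}_{\rm out}$ is $C_{\mathcal{N}}=\sum_{i,j}|i\rangle\langle j|\otimes\mathcal{N}(|i\rangle\langle j|)$, an operator on $\mathcal{H}_{\rm in}\otimes\mathcal{H}_{\rm out}$. A superchannel (deterministic supermap) is a linear map on linear maps sending channels to channels that can be realized as $\mathcal{N}\mapsto\mathcal{E}_{\rm post}\circ(\mathcal{N}\otimes\mathcal{I}_M)\circ\mathcal{E}_{\rm pre}$ for some ancilla system $M$ and channels $\mathcal{E}_{\rm pre},\mathcal{E}_{\rm post}$; equivalently it induces a completely positive linear map $\mathcal{C}_{\mathcal{R}}$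 on Choi operators defined by $\mathcal{C}_{\mathcal{R}}(C_{\mathcal{N}})=C_{\mathcal{R}(\mathcal{N})}$ (extended linearly to all operators on $\mathcal{H}_X\otimes\mathcal{H}_Z$). The rank of a supermap $\mathcal{R}$ is the rank of its Choi operator, which equals the Kraus rank of $\mathcal{C}_{\mathcal{R}}$. *)

(* Defs.v *)
(* Complex scalars: an arbitrary numClosedFieldType C
   (e.g. algC or complex R); finite-dimensional Hilbert spaces are C^d. *)
From HB Require Import structures.
From mathcomp Require Import all_boot all_order all_algebra.
From mathcomp Require Export sesquilinear spectral.
Set Implicit Arguments. Unset Strict Implicit. Unset Printing Implicit Defensive.
Import Order.TTheory GRing.Theory Num.Theory.
Local Open Scope ring_scope.
Local Open Scope sesquilinear_scope.

Section QDefs.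
Variable C : numClosedFieldType.

(* Tensor (Kronecker) product; the basis vector |i> (x) |k> of C^m (x) C^p
   is indexed by mxvec_index i k : 'I_(m * p). *)
Definition kron m n p q (A : 'M[C]_(m, n)) (B : 'M[C]_(p, q)) : 'M[C]_(m * p, n * q) :=
  \sum_(i < m) \sum_(j < n) \sum_(k < p) \sum_(l < q)
     (A i j * B k l) *: delta_mx (mxvec_index i k) (mxvec_index j l).

Definition block m p (M : 'M[C]_(m * p)) (i j : 'I_m) : 'M[C]_p :=
  \matrix_(k, l) M (mxvec_index i k) (mxvec_index j l).

Definition ptr2 m p (M : 'M[C]_(m * p)) : 'M[C]_m :=
  \matrix_(i, j) \sum_(k < p) M (mxvec_index i k) (mxvec_index j k).

Definition psd n (A : 'M[C]_n) : Prop :=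
  A ^t* = A /\ forall v : 'cV[C]_n, 0 <= (v ^t* *m A *m v) 0 0.

(* linear maps between operator spaces are represented by functions *)
Definition linmap m n (f : 'M[C]_m -> 'M[C]_n) : Prop :=
  forall (a : C) (x y : 'M[C]_m), f (a *: x + y) = a *: f x + f y.

Definition tens_id m n p (f : 'M[C]_m -> 'M[C]_n) (M : 'M[C]_(m * p)) : 'M[C]_(n * p) :=
  \sum_(i < m) \sum_(j < m) kron (f (delta_mx i j)) (block M i j).

Definition CPTP m n (f : 'M[C]_m -> 'M[C]_n) : Prop :=
  [/\ linmap f,
      (forall (p : nat) (M : 'M[C]_(m * p)), psd M -> psd (tens_id f M))
    & forall M : 'M[C]_m, \tr (f M) = \tr M].

Definition choi m n (f : 'M[C]_m -> 'M[C]_n) : 'M[C]_(m * n) :=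
  \sum_(i < m) \sum_(j < m) kron (delta_mx i j) (f (delta_mx i j)).

Definition choi_inv m n (T : 'M[C]_(m * n)) : 'M[C]_m -> 'M[C]_n :=
  fun rho => \sum_(i < m) \sum_(j < m) rho i j *: block T i j.

(* superchannels from maps X -> Z to maps Xr -> Zr (x) Ar
   (dims of Xr, Zr, Ar equal those of X, Z, A):
   R N = E_post o (N (x) id_M) o E_pre on all linear maps N *)
Definition superchannel dX dZ dA
    (R : ('M[C]_dX -> 'M[C]_dZ) -> ('M[C]_dX -> 'M[C]_(dZ * dA))) : Prop :=
  exists (dM : nat) (pre : 'M[C]_dX -> 'M[C]_(dX * dM))
         (post : 'M[C]_(dZ * dM) -> 'M[C]_(dZ * dA)),
    [/\ CPTP pre, CPTP post &
        forall N : 'M[C]_dX -> 'M[C]_dZ, linmap N ->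
          R N = fun rho => post (tens_id N (pre rho))].

(* the induced map on Choi operators, C_R(C_N) = C_{R(N)} *)
Definition choi_super dX dZ dA
    (R : ('M[C]_dX -> 'M[C]_dZ) -> ('M[C]_dX -> 'M[C]_(dZ * dA)))
    (T : 'M[C]_(dX * dZ)) : 'M[C]_(dX * (dZ * dA)) :=
  choi (R (choi_inv T)).

Definition super_rank dX dZ dA
    (R : ('M[C]_dX -> 'M[C]_dZ) -> ('M[C]_dX -> 'M[C]_(dZ * dA))) : nat :=
  \rank (choi (choi_super R)).

Definition ptr_super dX dZ dA (N : 'M[C]_dX -> 'M[C]_(dZ * dA)) : 'M[C]_dX -> 'M[C]_dZ :=
  fun rho => ptr2 (N rho).

End QDefs.

(* Main.v *)
Require Import Defs.
From HB Require Import structures.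
From mathcomp Require Import all_boot all_order all_algebra.
From mathcomp Require Import sesquilinear spectral.
From mathcomp Require Import ring zify.
From Stdlib Require Import FunctionalExtensionality.
Import Order.TTheory GRing.Theory Num.Theory.
Local Open Scope ring_scope.
Local Open Scope sesquilinear_scope.

Module Helpers.
Set Implicit Arguments. Unset Strict Implicit. Unset Printing Implicit Defensive.
Section Aux.
Variable C : numClosedFieldType.

Definition unpair m n (k : 'I_(m * n)) : 'I_m * 'I_n :=
  enum_val (cast_ord (esym (@mxvec_cast m n)) k).

Lemma unpairK m n (i : 'I_m) (j : 'I_n) : unpair (mxvec_index i j) = (i, j).
Proof. by rewrite /unpair /mxvec_index cast_ordK enum_rankK. Qed.

Lemma eq_mv m n (i i' : 'I_m) (j j' : 'I_n) :
  (mxvec_index i j == mxvec_index i' j') = (i == i') && (j == j').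
Proof.
apply/eqP/andP => [E|[/eqP-> /eqP->]] //.
by have := unpairK i j; rewrite E unpairK => -[-> ->].
Qed.

Lemma sum_mv m n (F : 'I_(m * n) -> C) :
  \sum_(k < m * n) F k = \sum_(i < m) \sum_(j < n) F (mxvec_index i j).
Proof.
rewrite pair_big /=.
rewrite (reindex (fun p : 'I_m * 'I_n => mxvec_index p.1 p.2)) //=.
exists (@unpair m n) => [[i j] _|k _] /=; first by rewrite unpairK.
by case/mxvec_indexP: k => i j; rewrite unpairK.
Qed.

Lemma sum_collapse (V : nmodType) (T : finType) (a : T) (G : T -> V) :
  (forall x, x != a -> G x = 0) -> \sum_x G x = G a.
Proof.
by move=> H; rewrite (bigD1 a) //= big1 ?addr0 // => x /H.
Qed.
Arguments sum_collapse {V T} a {G}.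

Lemma kronE m n p q (A : 'M[C]_(m, n)) (B : 'M[C]_(p, q)) i j k l :
  kron A B (mxvec_index i k) (mxvec_index j l) = A i j * B k l.
Proof.
rewrite /kron summxE (sum_collapse i) => [|i' ne]; last first.
  rewrite summxE big1 // => j' _; rewrite summxE big1 // => k' _.
  rewrite summxE big1 // => l' _; rewrite !mxE !eq_mv.
  by rewrite eq_sym (negPf ne) /= mulr0.
rewrite /= summxE (sum_collapse j) => [|j' ne]; last first.
  rewrite summxE big1 // => k' _.
  rewrite summxE big1 // => l' _; rewrite !mxE !eq_mv.
  by rewrite [j == _]eq_sym (negPf ne) /= andbF mulr0.
rewrite /= summxE (sum_collapse k) => [|k' ne]; last first.
  rewrite summxE big1 // => l' _; rewrite !mxE !eq_mv.
  by rewrite [k == _]eq_sym (negPf ne) /= andbF mulr0.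
rewrite /= summxE (sum_collapse l) => [|l' ne]; last first.
  by rewrite !mxE !eq_mv [l == _]eq_sym (negPf ne) /= !andbF mulr0.
by rewrite !mxE !eq_mv !eqxx mulr1.
Qed.

Lemma choiE m n (f : 'M[C]_m -> 'M[C]_n) i j k l :
  choi f (mxvec_index i k) (mxvec_index j l) = f (delta_mx i j) k l.
Proof.
rewrite /choi summxE (sum_collapse i) => [|i' ne]; last first.
  rewrite summxE big1 // => j' _; rewrite kronE mxE.
  by rewrite eq_sym (negPf ne) mul0r.
rewrite summxE (sum_collapse j) => [|j' ne]; last first.
  by rewrite kronE mxE [j == _]eq_sym (negPf ne) andbF mul0r.
by rewrite kronE mxE !eqxx mul1r.
Qed.

Lemma tens_idE m n p (f : 'M[C]_m -> 'M[C]_n) (M : 'M[C]_(m * p)) i j k l :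
  tens_id f M (mxvec_index i k) (mxvec_index j l) =
  \sum_(c < m) \sum_(d < m) f (delta_mx c d) i j * M (mxvec_index c k) (mxvec_index d l).
Proof.
rewrite /tens_id summxE; apply: eq_bigr => c _; rewrite summxE.
by apply: eq_bigr => d _; rewrite kronE mxE.
Qed.

Lemma choi_inv_delta m n (T : 'M[C]_(m * n)) c d :
  choi_inv T (delta_mx c d) = block T c d.
Proof.
rewrite /choi_inv (sum_collapse c) => [|i ne]; last first.
  by rewrite big1 // => j _; rewrite mxE (negPf ne) scale0r.
rewrite (sum_collapse d) => [|j ne]; last first.
  by rewrite mxE (negPf ne) andbF scale0r.
by rewrite mxE !eqxx scale1r.
Qed.

Lemma tens_id_choi_invE m n p (T : 'M[C]_(m * n)) (M : 'M[C]_(m * p)) i j k l :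
  tens_id (choi_inv T) M (mxvec_index i k) (mxvec_index j l) =
  \sum_(c < m) \sum_(d < m) T (mxvec_index c i) (mxvec_index d j) *
     M (mxvec_index c k) (mxvec_index d l).
Proof.
rewrite tens_idE; apply: eq_bigr => c _; apply: eq_bigr => d _.
by rewrite choi_inv_delta mxE.
Qed.

Lemma linmap0 m n (f : 'M[C]_m -> 'M[C]_n) : linmap f -> f 0 = 0.
Proof.
move=> lf; have := lf 1 0 0; rewrite scale1r addr0.
move/(congr1 (fun x => x - f 0)). rewrite addrK subrr scale1r => E. by rewrite [RHS]E.
Qed.

Lemma linmapD m n (f : 'M[C]_m -> 'M[C]_n) : linmap f -> forall x y, f (x + y) = f x + f y.
Proof. by move=> lf x y; have := lf 1 x y; rewrite !scale1r. Qed.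

Lemma linmapZ m n (f : 'M[C]_m -> 'M[C]_n) : linmap f -> forall a x, f (a *: x) = a *: f x.
Proof. by move=> lf a x; rewrite -[a *: x]addr0 lf linmap0 // addr0. Qed.

Lemma linmap_expand m n (f : 'M[C]_m -> 'M[C]_n) (W : 'M[C]_m) : linmap f ->
  f W = \sum_(a < m) \sum_(b < m) W a b *: f (delta_mx a b).
Proof.
move=> lf; rewrite {1}(matrix_sum_delta W).
rewrite (big_morph f (linmapD lf) (linmap0 lf)); apply: eq_bigr => a _.
rewrite (big_morph f (linmapD lf) (linmap0 lf)); apply: eq_bigr => b _.
by rewrite linmapZ.
Qed.

End Aux.
Arguments sum_collapse {V T} a {G}.

Section Pos.
Variable C : numClosedFieldType.

Definition pos n (A : 'M[C]_n) := forall v : 'cV[C]_n, 0 <= (v ^t* *m A *m v) 0 0.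

Lemma tcM m n p (A : 'M[C]_(m, n)) (B : 'M[C]_(n, p)) : (A *m B) ^t* = B ^t* *m A ^t*.
Proof. by rewrite trmx_mul map_mxM. Qed.

Lemma pos_conj m n (S : 'M[C]_(m, n)) (M : 'M[C]_n) : pos M -> pos (S *m M *m S ^t*).
Proof.
by move=> pM v; have := pM (S ^t* *m v); rewrite tcM trmxCK !mulmxA.
Qed.

Lemma pos_reindex m n (M : 'M[C]_n) (c : 'I_m -> C) (f : 'I_m -> 'I_n) :
  pos M -> pos (\matrix_(i, j) (c i * M (f i) (f j) * (c j)^*)).
Proof.
move=> pM; set S : 'M[C]_(m, n) := \matrix_(i, k) (c i * (f i == k)%:R).
suff -> : \matrix_(i, j) (c i * M (f i) (f j) * (c j)^*) = S *m M *m S ^t*.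
  exact: pos_conj.
apply/matrixP => i j; rewrite !mxE (sum_collapse (f j)) => [|l ne]; last first.
  by rewrite !mxE eq_sym (negPf ne) /= mulr0 rmorph0 mulr0.
rewrite !mxE eqxx rmorph1 mulr1; congr (_ * _).
rewrite (sum_collapse (f i)) => [|k ne]; last first.
  by rewrite !mxE eq_sym (negPf ne) /= mulr0 mul0r.
by rewrite !mxE eqxx mulr1.
Qed.

Lemma qformD n (A : 'M[C]_n) (u w : 'cV[C]_n) (c : C) :
  ((u + c *: w) ^t* *m A *m (u + c *: w)) 0 0 =
  (u ^t* *m A *m u) 0 0 + c * (u ^t* *m A *m w) 0 0 + c^* * (w ^t* *m A *m u) 0 0
  + c^* * c * (w ^t* *m A *m w) 0 0.
Proof.
have -> : (u + c *: w) ^t* = u ^t* + c^* *: w ^t*.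
  by apply/matrixP => i j; rewrite !mxE rmorphD rmorphM.
rewrite !mulmxDl !mulmxDr -!scalemxAl -!scalemxAr !mxE.
ring.
Qed.

Lemma qform_delta n (A : 'M[C]_n) i j :
  ((delta_mx i 0 : 'cV[C]_n) ^t* *m A *m (delta_mx j 0 : 'cV[C]_n)) 0 0 = A i j.
Proof.
rewrite !mxE (sum_collapse j) => [|l ne]; last first.
  by rewrite !mxE (negPf ne) mulr0.
rewrite !mxE !eqxx mulr1 (sum_collapse i) => [|k ne]; last first.
  by rewrite !mxE (negPf ne) rmorph0 mul0r.
by rewrite !mxE !eqxx rmorph1 mul1r.
Qed.

Lemma pos_herm n (A : 'M[C]_n) : pos A -> A ^t* = A.
Proof.
move=> pA; apply/matrixP => i j; rewrite !mxE.
set ei : 'cV[C]_n := delta_mx i 0; set ej : 'cV[C]_n := delta_mx j 0.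
have rq : forall v : 'cV[C]_n, (v ^t* *m A *m v) 0 0 \is Num.real.
  by move=> v; apply: ger0_real; apply: pA.
have rii : A i i \is Num.real by rewrite -qform_delta; apply: rq.
have rjj : A j j \is Num.real by rewrite -qform_delta; apply: rq.
have r1 : A i j + A j i \is Num.real.
  have := rq (ei + 1 *: ej); rewrite qformD !qform_delta rmorph1 !mul1r.
  move=> h; have : A i i + A i j + A j i + A j j - A i i - A j j \is Num.real.
    by rewrite !rpredB.
  by congr (_ \is _); ring.
have r2 : 'i * (A i j - A j i) \is Num.real.
  have := rq (ei + 'i *: ej); rewrite qformD !qform_delta conjCi.
  have ii : 'i * 'i = -1 :> C by rewrite -expr2 sqrCi.
  move=> h; have : A i i + 'i * A i j + - 'i * A j i + - 'i * 'i * A j j - A i i - A j j \is Num.real.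
    by rewrite !rpredB.
  have E : - 'i * 'i = 1 :> C by rewrite mulNr ii opprK.
  rewrite E mul1r => H.
  suff -> : 'i * (A i j - A j i) = A i i + 'i * A i j + - 'i * A j i + A j j - A i i - A j j by [].
  ring.
have e1 := conj_Creal r1; have e2 := conj_Creal r2.
rewrite rmorphD /= in e1; rewrite rmorphM rmorphB /= conjCi in e2.
have ii : 'i * 'i = -1 :> C by rewrite -expr2 sqrCi.
set a := A i j in e1 e2 *; set b := A j i in e1 e2 *.
have h2 : a^* - b^* = b - a.
  transitivity (- ('i * 'i) * (a^* - b^*)); first by rewrite ii opprK mul1r.
  transitivity ('i * (- 'i * (a^* - b^*))); first by ring.
  rewrite e2; transitivity (('i * 'i) * (a - b)); first by ring.
  by rewrite ii; ring.
apply: (@mulIf _ 2%:R); first by rewrite pnatr_eq0.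
transitivity ((a^* + b^*) - (a^* - b^*)); first by ring.
by rewrite e1 h2; ring.
Qed.

Lemma pos_psd n (A : 'M[C]_n) : pos A -> psd A.
Proof. by move=> pA; split => //; apply: pos_herm. Qed.

Lemma psd_pos n (A : 'M[C]_n) : psd A -> pos A.
Proof. by case. Qed.

Lemma pos1 : pos (1%:M : 'M[C]_1).
Proof.
move=> v; rewrite mulmx1 !mxE big_ord1 !mxE mulrC.
exact: mul_conjC_ge0.
Qed.

Lemma CP_pos m n p (f : 'M[C]_m -> 'M[C]_n) (M : 'M[C]_(m * p)) :
  CPTP f -> pos M -> pos (tens_id f M).
Proof. by case=> _ H _ pM; apply: psd_pos; apply: H; apply: pos_psd. Qed.

End Pos.

Section Super.
Variable C : numClosedFieldType.

Lemma linmap_choi_inv m n (T : 'M[C]_(m * n)) : linmap (choi_inv T).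
Proof.
move=> a x y; rewrite /choi_inv scaler_sumr -big_split; apply: eq_bigr => i _.
rewrite scaler_sumr -big_split; apply: eq_bigr => j _.
by rewrite !mxE scalerDl scalerA.
Qed.

Lemma tens_id_choi_inv_lin m n p (a : C) (x y : 'M[C]_(m * n)) (M : 'M[C]_(m * p)) :
  tens_id (choi_inv (a *: x + y)) M =
  a *: tens_id (choi_inv x) M + tens_id (choi_inv y) M.
Proof.
apply/matrixP => I J; case/mxvec_indexP: I => i k; case/mxvec_indexP: J => j l.
rewrite !mxE !tens_id_choi_invE mulr_sumr -big_split; apply: eq_bigr => c _.
rewrite mulr_sumr -big_split; apply: eq_bigr => d _.
by rewrite !mxE mulrDl mulrA.
Qed.

Variables (dX dZ dA dM : nat).
Variable pre : 'M[C]_dX -> 'M[C]_(dX * dM).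
Variable post : 'M[C]_(dZ * dM) -> 'M[C]_(dZ * dA).
Variable R : ('M[C]_dX -> 'M[C]_dZ) -> ('M[C]_dX -> 'M[C]_(dZ * dA)).
Hypothesis Hpre : CPTP pre.
Hypothesis Hpost : CPTP post.
Hypothesis HR : forall N : 'M[C]_dX -> 'M[C]_dZ, linmap N ->
          R N = fun rho => post (tens_id N (pre rho)).

Lemma PhiE (T : 'M[C]_(dX * dZ)) i k j l :
  choi_super R T (mxvec_index i k) (mxvec_index j l) =
  post (tens_id (choi_inv T) (pre (delta_mx i j))) k l.
Proof. by rewrite /choi_super choiE HR //; apply: linmap_choi_inv. Qed.

Lemma Phi_lin : linmap (choi_super R).
Proof.
have lpost : linmap post by case: Hpost.
move=> a x y; apply/matrixP => I J.
case/mxvec_indexP: I => i k; case/mxvec_indexP: J => j l.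
by rewrite !mxE !PhiE tens_id_choi_inv_lin lpost !mxE.
Qed.

Definition cO (I : 'I_(dX * dX)) : C := ((unpair I).1 == (unpair I).2)%:R.
Definition Omega : 'M[C]_(dX * dX) :=
  \matrix_(I, J) (cO I * (1%:M : 'M[C]_1) ((fun _ => 0) I) ((fun _ => 0) J) * (cO J)^*).

Lemma pos_Omega : pos Omega.
Proof. exact: (pos_reindex (M := 1%:M) cO (fun _ => 0) (@pos1 C)). Qed.

Definition G := tens_id pre Omega.

Lemma pos_G : pos G.
Proof. exact: CP_pos Hpre pos_Omega. Qed.

Lemma GE (al be : 'I_(dX * dM)) x y :
  G (mxvec_index al x) (mxvec_index be y) = pre (delta_mx x y) al be.
Proof.
rewrite /G tens_idE (sum_collapse x) => [|c ne]; last first.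
  rewrite big1 // => d _; rewrite /Omega mxE /cO !unpairK /=.
  by rewrite (negPf ne) /= !mul0r mulr0.
rewrite (sum_collapse y) => [|d ne]; last first.
  rewrite /Omega mxE /cO !unpairK /=.
  by rewrite (negPf ne) /= rmorph0 !mulr0.
by rewrite /Omega mxE /cO !unpairK /= !eqxx /= mxE eqxx /= !mul1r rmorph1 mulr1.
Qed.

Definition cY (I : 'I_((dZ * dM) * ((dX * dZ) * dX))) : C :=
  ((unpair (unpair I).1).1 == (unpair (unpair (unpair I).2).1).2)%:R.
Definition fY (I : 'I_((dZ * dM) * ((dX * dZ) * dX))) : 'I_((dX * dM) * dX) :=
  mxvec_index (mxvec_index (unpair (unpair (unpair I).2).1).1 (unpair (unpair I).1).2)
              (unpair (unpair I).2).2.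

Definition Y : 'M[C]_((dZ * dM) * ((dX * dZ) * dX)) :=
  \matrix_(I, J) (cY I * G (fY I) (fY J) * (cY J)^*).

Lemma pos_Y : pos Y.
Proof. exact: pos_reindex pos_G. Qed.

Definition T := tens_id post Y.

Lemma pos_T : pos T.
Proof. exact: CP_pos Hpost pos_Y. Qed.

Definition fK (I : 'I_((dX * dZ) * (dX * (dZ * dA)))) : 'I_((dZ * dA) * ((dX * dZ) * dX)) :=
  mxvec_index (unpair (unpair I).2).2 (mxvec_index (unpair I).1 (unpair (unpair I).2).1).

Lemma choi_Phi_eq :
  choi (choi_super R) = \matrix_(I, J) (1 * T (fK I) (fK J) * 1^*).
Proof.
have lpost : linmap post by case: Hpost.
apply/matrixP => I J.
case/mxvec_indexP: I => a r; case/mxvec_indexP: r => x s.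
case/mxvec_indexP: J => b r; case/mxvec_indexP: r => y t.
rewrite choiE PhiE mxE /fK !unpairK /= rmorph1 mul1r mulr1.
rewrite /T tens_idE (linmap_expand _ lpost) summxE; apply: eq_bigr => al _.
rewrite summxE; apply: eq_bigr => be _; rewrite mxE mulrC; congr (_ * _).
case/mxvec_indexP: al => z m; case/mxvec_indexP: be => z' m'.
case/mxvec_indexP: a => a1 a2; case/mxvec_indexP: b => b1 b2.
rewrite /Y mxE /cY /fY !unpairK /= GE tens_id_choi_invE.
rewrite (sum_collapse a1) => [|c ne]; last first.
  by rewrite big1 // => d _; rewrite mxE !eq_mv (negPf ne) /= mul0r.
rewrite (sum_collapse b1) => [|d ne]; last first.
  by rewrite mxE !eq_mv (negPf ne) /= andbF mul0r.
rewrite mxE !eq_mv !eqxx /= [z == _]eq_sym [z' == _]eq_sym.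
by case: (a2 == z); case: (b2 == z'); rewrite /= ?rmorph0 ?rmorph1 ?mul0r ?mulr0 ?mul1r ?mulr1.
Qed.

Lemma pos_choi_Phi : pos (choi (choi_super R)).
Proof. by rewrite choi_Phi_eq; apply: pos_reindex pos_T. Qed.

End Super.

Section Factor.
Variable C : numClosedFieldType.

Lemma rank_AAt M n (A : 'M[C]_(M, n)) : (\rank A <= \rank (A *m A ^t*))%N.
Proof.
have sub : (kermx (A *m A ^t*) <= kermx A)%MS.
  apply/row_subP => i; set w := row i _.
  have /sub_kermxP wAA : (w <= kermx (A *m A ^t*))%MS by apply: row_sub.
  apply/sub_kermxP; set u := w *m A.
  have uu : dotmx u u = 0.
    by rewrite dotmxE /u tcM !mulmxA -(mulmxA w) wAA mul0mx mxE.
  by have [//|/dotmx_is_dotmx] := eqVneq u 0; rewrite uu ltxx.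
have := mxrankS sub; rewrite !mxrank_ker.
have := rank_leq_row A; have := rank_leq_row (A *m A ^t*).
lia.
Qed.

Lemma psd_factor M (J : 'M[C]_M) : pos J -> exists B : 'M[C]_(M, M), B *m B ^t* = J.
Proof.
move=> pJ; have hJ := pos_herm pJ.
have nJ : J \is normalmx.
  by apply: hermitian_normalmx; rewrite is_hermitianmxE expr0 scale1r hJ.
set U := spectralmx J; set d := spectral_diag J.
have uU : U \is unitarymx := spectral_unitarymx J.
have EJ : J = U ^t* *m diag_mx d *m U.
  by rewrite -invmx_unitary //; apply/orthomx_spectralP.
have UUt : U *m U ^t* = 1%:M by apply/unitarymxP.
have UJU : U *m J *m U ^t* = diag_mx d.
  by rewrite EJ !mulmxA UUt mul1mx -mulmxA UUt mulmx1.
have dge : forall k, 0 <= d 0 k.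
  move=> k; have pD : pos (diag_mx d) by rewrite -UJU; apply: pos_conj.
  by have := pD (delta_mx k 0); rewrite qform_delta mxE eqxx mulr1n.
set s : 'rV[C]_M := \row_k sqrtC (d 0 k).
have Ds : (diag_mx s) ^t* = diag_mx s.
  rewrite tr_diag_mx map_diag_mx; congr diag_mx; apply/rowP => k.
  by rewrite !mxE; apply: conj_Creal; rewrite ger0_real // sqrtC_ge0.
have ss : diag_mx s *m diag_mx s = diag_mx d.
  rewrite mul_diag_mx; apply/matrixP => i j; rewrite !mxE.
  case: (eqVneq i j) => [->|ne]; last by rewrite !mulr0n mulr0.
  by rewrite !mulr1n -expr2 sqrtCK.
exists (U ^t* *m diag_mx s).
by rewrite tcM trmxCK Ds !mulmxA -(mulmxA (U ^t*)) ss -EJ.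
Qed.

Lemma factor_rank M n (B : 'M[C]_(M, n)) :
  exists X : 'M[C]_(M, \rank B), X *m X ^t* = B *m B ^t*.
Proof.
set S := schmidt (row_base B).
have uS : S \is unitarymx by apply: schmidt_unitarymx; apply: rank_leq_col.
have : (B <= S)%MS.
  by rewrite (eqmx_schmidt_free (row_base_free B)) eq_row_base.
case/submxP => D EB.
have SSt : S *m S ^t* = 1%:M by apply/unitarymxP.
have BSS : B *m S ^t* *m S = B.
  have E : D *m S *m S ^t* *m S = D *m S.
    by rewrite -!mulmxA (mulmxA S) SSt mul1mx.
  by rewrite -EB in E.
exists (B *m S ^t*).
by rewrite tcM trmxCK mulmxA BSS.
Qed.

Lemma pos_factor M (J : 'M[C]_M) : pos J ->
  exists r, (r <= \rank J)%N /\ exists X : 'M[C]_(M, r), X *m X ^t* = J.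
Proof.
move=> /psd_factor [B EB].
have [X EX] := factor_rank B.
exists (\rank B); split; first by rewrite -EB; apply: rank_AAt.
by exists X; rewrite EX.
Qed.

End Factor.

Section Kraus.
Variable C : numClosedFieldType.

Lemma kronM m n p m' n' p' (A : 'M[C]_(m, n)) (A' : 'M[C]_(n, p))
   (B : 'M[C]_(m', n')) (B' : 'M[C]_(n', p')) :
  kron A B *m kron A' B' = kron (A *m A') (B *m B').
Proof.
apply/matrixP => I J; case/mxvec_indexP: I => i k; case/mxvec_indexP: J => j l.
rewrite kronE !mxE sum_mv mulr_suml; apply: eq_bigr => a _.
rewrite mulr_sumr; apply: eq_bigr => c _; rewrite !kronE; ring.
Qed.

Lemma kron_tc m n p q (A : 'M[C]_(m, n)) (B : 'M[C]_(p, q)) :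
  (kron A B) ^t* = kron (A ^t*) (B ^t*).
Proof.
apply/matrixP => I J; case/mxvec_indexP: I => j l; case/mxvec_indexP: J => i k.
by rewrite !mxE !kronE !mxE rmorphM.
Qed.

Lemma tc1 n : (1%:M : 'M[C]_n) ^t* = 1%:M.
Proof. by rewrite trmx1 map_mx1. Qed.

Lemma tc_inv n (P : 'M[C]_n) : P ^t* = P -> (invmx P) ^t* = invmx P.
Proof. by move=> hP; rewrite trmx_inv map_invmx hP. Qed.

Lemma kraus n N r (Phi : 'M[C]_n -> 'M[C]_N) (B : 'M[C]_(n * N, r)) :
  linmap Phi -> B *m B ^t* = choi Phi ->
  exists K : 'M[C]_(N, n * r), forall tau,
    Phi tau = K *m kron tau (1%:M : 'M[C]_r) *m K ^t*.
Proof.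
move=> lP EB.
set K : 'M[C]_(N, n * r) := \matrix_(i, I) B (mxvec_index (unpair I).1 i) (unpair I).2.
exists K => tau; apply/matrixP => i j.
rewrite (linmap_expand _ lP) summxE.
rewrite mxE sum_mv.
transitivity (\sum_(b < n) \sum_(l < r) (\sum_(a < n) B (mxvec_index a i) l * tau a b) *
      (B (mxvec_index b j) l)^*); last first.
  apply: eq_bigr => b _; apply: eq_bigr => l _.
  congr (_ * _); last by rewrite /K !mxE unpairK.
  rewrite mxE sum_mv; apply: eq_bigr => a _.
  rewrite (sum_collapse l) => [|k ne]; last first.
    by rewrite kronE [_ k l]mxE (negPf ne) mulr0 mulr0.
  by rewrite kronE /K !mxE !unpairK /= eqxx mulr1.
have swap : forall (F : 'I_n -> 'I_n -> 'I_r -> C),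
    \sum_(b < n) \sum_(l < r) (\sum_(a < n) F a b l) = \sum_(a < n) \sum_(b < n) \sum_(l < r) F a b l.
  move=> F; rewrite [LHS](eq_bigr (fun b => \sum_(a < n) \sum_(l < r) F a b l)).
    by rewrite exchange_big.
  by move=> b _; rewrite exchange_big.
transitivity (\sum_(b < n) \sum_(l < r) (\sum_(a < n)
     B (mxvec_index a i) l * tau a b * (B (mxvec_index b j) l)^*)); last first.
  by apply: eq_bigr => b _; apply: eq_bigr => l _; rewrite mulr_suml.
rewrite swap; apply: eq_bigr => a _.
rewrite summxE; apply: eq_bigr => b _.
rewrite mxE -(choiE Phi a b i j) -EB mxE mulr_sumr; apply: eq_bigr => l _.
by rewrite !mxE; ring.
Qed.

Lemma sq_unitary m n (V : 'M[C]_(m, n)) : m = n -> V *m V ^t* = 1%:M -> V ^t* *m V = 1%:M.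
Proof. by move=> E; subst n; apply: mulmx1C. Qed.

Lemma choi_invK m n (f : 'M[C]_m -> 'M[C]_n) : linmap f -> choi_inv (choi f) = f.
Proof.
move=> lf; apply: functional_extensionality => rho.
rewrite (linmap_expand _ lf) /choi_inv; apply: eq_bigr => i _; apply: eq_bigr => j _.
congr (_ *: _); apply/matrixP => k l; by rewrite mxE choiE.
Qed.

Lemma linmap_ptr dX dZ dA (G : 'M[C]_dX -> 'M[C]_(dZ * dA)) :
  linmap G -> linmap (ptr_super G).
Proof.
move=> lG a x y; rewrite /ptr_super lG; apply/matrixP => i j.
rewrite !mxE mulr_sumr -big_split; apply: eq_bigr => k _.
by rewrite !mxE.
Qed.

End Kraus.

End Helpers.
Import Helpers.

Theorem lemma2 (C : numClosedFieldType) (dX dZ dA : nat)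
  (Gamma : 'M[C]_dX -> 'M[C]_(dZ * dA))
  (R : ('M[C]_dX -> 'M[C]_dZ) -> ('M[C]_dX -> 'M[C]_(dZ * dA)))
  (P : 'M[C]_(dX * (dZ * dA))) (Q : 'M[C]_(dX * dZ)) :
  CPTP Gamma ->
  choi Gamma \in unitmx ->
  choi (ptr_super Gamma) \in unitmx ->
  superchannel R ->
  R (ptr_super Gamma) = Gamma ->
  (* P = C_Gamma^{1/2} and Q = C_{S(Gamma)}^{1/2} (the PSD square roots) *)
  psd P -> P *m P = choi Gamma ->
  psd Q -> Q *m Q = choi (ptr_super Gamma) ->
  exists (dR : nat), (dA <= dR)%N /\
  exists V : 'M[C]_(dX * (dZ * dA), (dX * dZ) * dR),
    [/\ V *m V ^t* = 1%:M,
        (forall tau : 'M[C]_(dX * dZ),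
           choi_super R tau =
           P *m V *m kron (invmx Q *m tau *m invmx Q) (1%:M : 'M[C]_dR)
             *m V ^t* *m P)
      & (super_rank R = dA -> dR = dA /\ V ^t* *m V = 1%:M)].
Proof.
move=> cG uG uS sR RS pP PP pQ QQ.
case: sR => dM [pre [post [Hpre Hpost HR]]].
have lPhi : linmap (choi_super R) := Phi_lin Hpost HR.
have pJ : pos (choi (choi_super R)) := pos_choi_Phi Hpre Hpost HR.
have [r [hr [X EX]]] := pos_factor pJ.
pose dR := maxn r dA.
have rdR : (r <= dR)%N by apply: leq_maxl.
have EX' : (X *m (pid_mx r : 'M[C]_(r, dR))) *m (X *m (pid_mx r : 'M[C]_(r, dR))) ^t*
           = choi (choi_super R).
  rewrite tcM !mulmxA -(mulmxA X) tr_pid_mx map_pid_mx mul_pid_mx minnn.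
  by rewrite (minn_idPr rdR) pid_mx_1 mulmx1.
have [K EK] := kraus lPhi EX'.
have hP : P ^t* = P by case: pP.
have hQ : Q ^t* = Q by case: pQ.
have uP : P \in unitmx by move: uG; rewrite -PP unitmx_mul => /andP[].
have uQ : Q \in unitmx by move: uS; rewrite -QQ unitmx_mul => /andP[].
have lG : linmap Gamma by case: cG.
have PhiQQ : choi_super R (Q *m Q) = P *m P.
  by rewrite QQ PP /choi_super choi_invK ?RS //; apply: linmap_ptr.
pose V := invmx P *m K *m kron Q (1%:M : 'M[C]_dR).
have Vt : V ^t* = kron Q (1%:M : 'M[C]_dR) *m K ^t* *m invmx P.
  by rewrite /V !tcM kron_tc hQ tc1 tc_inv // mulmxA.
have kQ : kron (Q *m Q) (1%:M : 'M[C]_dR) = kron Q 1%:M *m kron Q 1%:M.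
  by rewrite kronM mulmx1.
have VV : V *m V ^t* = 1%:M.
  rewrite Vt.
  have -> : V *m (kron Q 1%:M *m K ^t* *m invmx P) =
            invmx P *m (K *m kron (Q *m Q) 1%:M *m K ^t*) *m invmx P.
    by rewrite kQ /V !mulmxA.
  by rewrite -EK PhiQQ mulmxA mulVmx // mul1mx mulmxV.
exists dR; split; first exact: leq_maxr.
exists V; split => //.
- move=> tau.
  have kk : kron Q (1%:M : 'M[C]_dR) *m kron (invmx Q *m tau *m invmx Q) 1%:M
              *m kron Q 1%:M = kron tau 1%:M.
    by rewrite !kronM !mulmx1 !mulmxA mulmxV // mul1mx -mulmxA mulVmx // mulmx1.
  rewrite EK Vt /V -kk !mulmxA mulmxV // mul1mx.
  by rewrite -[RHS]mulmxA mulVmx // mulmx1.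
- rewrite /super_rank => hrank.
  have dRdA : dR = dA by apply/maxn_idPr; rewrite -hrank.
  split => //; apply: sq_unitary VV.
  by rewrite dRdA mulnA.
Qed.
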